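(* Let $\mu$ be an offspring distribution, let $X,X_1,X_2,\dots$ be i.i.d. with $\mathbf P(X=i)=\mu_{i+1}$ for $i\ge-1$, and let $\Delta_n=\Delta(\mathrm T_n)$. For $N\ge0$ with $\mu(\{0,1,\dots,N\})>0$, let $X^{<N}_1,X^{<N}_2,\dots$ be i.i.d. with $\mathbf P(X^{<N}_1=i)=\mu_{i+1}/\mu(\{0,\dots,N\})$ for $i\in\{-1,0,\dots,N-1\}$ (i.e. distributed as $X$ conditioned on $X<N$). Then for every integer $n>N+1$ such that $\mathrm T_n$ is defined and the denominator below is positive, \[ \mathbf P(\Delta_n\le N)\le\frac{\mathbf P\big(X^{<N}_1+\dots+X^{<N}_n=-1\big)}{n\,\mathbf P(X_1=N)\,\mathbf P\big(X^{<N}_2+\dots+X^{<N}_n=-N-1\big)}. \]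
   Context: An offspring distribution is a probability measure $\mu=(\mu_k)_{k\ge0}$ on $\mathbb Z_+$. $\mathrm T_n$ is a $\mu$-Bienaymé (Galton–Watson) tree conditioned to have exactly $n$ vertices (defined when this event has positive probability), and $\Delta(\mathrm t)$ is the maximal number of children of a vertex of the tree $\mathrm t$. *)

(* Defs.v *)
From HB Require Import structures.
From mathcomp Require Import all_boot all_order all_algebra.
From mathcomp Require Import all_classical all_reals all_analysis.
Set Implicit Arguments. Unset Strict Implicit. Unset Printing Implicit Defensive.
Import Order.TTheory GRing.Theory Num.Theory.
Local Open Scope ring_scope.
Local Open Scope classical_set_scope.
Import numFieldNormedType.Exports.

Inductive tree := Node of seq tree.

Fixpoint tsize (t : tree) : nat :=
  let: Node ts := t in (sumn (map tsize ts)).+1.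

Fixpoint maxdeg (t : tree) : nat :=
  let: Node ts := t in foldr maxn (size ts) (map maxdeg ts).

(* Bienayme-Galton-Watson weight  P(T = t) = prod_{u in t} mu_{k_u(t)} *)
Fixpoint gw_weight {R : nzRingType} (mu : nat -> R) (t : tree) : R :=
  let: Node ts := t in
  mu (size ts) * foldr (fun x acc => x * acc) 1 (map (gw_weight mu) ts).

Fixpoint forests_fuel (fuel m : nat) : seq (seq tree) :=
  match fuel with
  | 0 => [::]
  | fuel'.+1 =>
    if m is 0 then [:: [::]] else
    flatten [seq [seq Node f :: g | f <- forests_fuel fuel' k,
                                    g <- forests_fuel fuel' (m - k.+1)]
            | k <- iota 0 m]
  end.

Definition forests (m : nat) : seq (seq tree) := forests_fuel m.+1 m.

Definition plane_trees (n : nat) : seq tree :=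
  if n is n'.+1 then [seq Node f | f <- forests n'] else [::].

Definition gw_size_mass {R : nzRingType} (mu : nat -> R) (n : nat) : R :=
  \sum_(t <- plane_trees n) gw_weight mu t.

(* P(Delta(T_n) <= N) for T_n the mu-GW tree conditioned to have n vertices *)
Definition prob_maxdeg_le {R : realType} (mu : nat -> R) (n N : nat) : R :=
  (\sum_(t <- plane_trees n | (maxdeg t <= N)%N) gw_weight mu t) / gw_size_mass mu n.

Definition offspring_distribution {R : realType} (mu : nat -> R) : Prop :=
  (forall k, 0 <= mu k) /\ ((fun n => \sum_(k < n) mu k) : nat -> R) @ \oo --> (1 : R).

(* Given a law p on Z_+ (p k = P(xi = k)), and X_i = xi_i - 1 i.i.d.,
   P(X_1 + ... + X_n = s) (s : int).  Since X_i >= -1, the event is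
   { xi_1 + ... + xi_n = n + s }, a finite sum. *)
Definition sum_mass {R : nzRingType} (p : nat -> R) (n m : nat) : R :=
  \sum_(k : {ffun 'I_n -> 'I_m.+1} | (\sum_(i < n) (k i : nat))%N == m)
     \prod_(i < n) p (k i : nat).

Definition walk_prob {R : nzRingType} (p : nat -> R) (n : nat) (s : int) : R :=
  if (0 <= n%:Z + s)%R then sum_mass p n (absz (n%:Z + s)) else 0.

(* law of X conditioned on X < N, shifted by +1: p k = P(X^{<N} = k - 1) *)
Definition trunc_law {R : realType} (mu : nat -> R) (N : nat) (k : nat) : R :=
  if (k <= N)%N then mu k / (\sum_(j < N.+1) mu j) else 0.

(* Main.v *)
Require Import Defs.
From HB Require Import structures.
From mathcomp Require Import all_boot all_order all_algebra.
From mathcomp Require Import all_classical all_reals all_analysis.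
Import Order.TTheory GRing.Theory Num.Theory.
From mathcomp Require Import zify ring.
Import numFieldNormedType.Exports.
Set Implicit Arguments. Unset Strict Implicit. Unset Printing Implicit Defensive.

Section Sec_T1.
Fixpoint tree_ind' (P : tree -> Prop) (hw : forall ts, List.Forall P ts -> P (Node ts))
  (t : tree) : P t :=
  match t with Node ts => hw ts ((fix aux ts : List.Forall P ts :=
     match ts with nil => List.Forall_nil _ | cons t ts' =>
       List.Forall_cons _ (tree_ind' hw t) (aux ts') end) ts) end.

Fixpoint tenc (t : tree) : GenTree.tree unit :=
  let: Node ts := t in GenTree.Node 0 (map tenc ts).
Fixpoint tdec (g : GenTree.tree unit) : tree :=
  match g with GenTree.Leaf _ => Node [::] | GenTree.Node _ gs => Node (map tdec gs) end.
Lemma tencK : cancel tenc tdec.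
Proof.
elim/tree_ind' => ts IH /=; congr Node; elim: IH => //= t ts' Ht _ ->.
by rewrite Ht.
Qed.
HB.instance Definition _ := Countable.copy tree (can_type tencK).


Lemma tree_ind2 (P : tree -> Prop) :
  (forall ts, (forall t, t \in ts -> P t) -> P (Node ts)) -> forall t, P t.
Proof.
move=> hw; elim/tree_ind' => ts IH; apply: hw.
elim: IH => // t ts' Ht _ IH u; rewrite inE => /orP[/eqP->//|]; exact: IH.
Qed.

Fixpoint luk (t : tree) : seq nat :=
  let: Node ts := t in size ts :: flatten (map luk ts).
Definition lukf (f : seq tree) := flatten (map luk f).
Definition fsize (f : seq tree) := sumn (map Defs.tsize f).

Lemma lukE ts : luk (Node ts) = size ts :: lukf ts. Proof. by []. Qed.
Lemma lukf_cons t f : lukf (t :: f) = luk t ++ lukf f. Proof. by []. Qed.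

Fixpoint okw (w : nat) (s : seq nat) : bool :=
  if s is x :: s' then (0 < w) && okw (w.-1 + x) s' else w == 0.

Lemma okw_tree t : forall w r, okw w.+1 (luk t ++ r) = okw w r.
Proof.
elim/tree_ind2: t => ts IH w r /=.
rewrite addnC; elim: ts IH w r => [|t ts IHts] IH w r //=.
rewrite -catA addSn IH ?mem_head // IHts // => u ut; apply: IH.
by rewrite inE ut orbT.
Qed.

Lemma okw_forest f w r : okw (w + size f) (lukf f ++ r) = okw w r.
Proof.
elim: f w r => [|t f IH] w r /=; first by rewrite addn0.
by rewrite -catA -addSnnS okw_tree IH.
Qed.

Lemma okw_sum w s : okw w s -> sumn s + w = size s.
Proof.
elim: s w => [|x s IH] w /=; first by move/eqP->.
case/andP => w0 /IH <-; lia.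
Qed.

Lemma luk_prefix t : forall t' r r', luk t ++ r = luk t' ++ r' -> t = t' /\ r = r'.
Proof.
elim/tree_ind2: t => ts IH [ts'] r r' /= [Hs hw].
suff [-> ->] : ts = ts' /\ r = r' by [].
elim: ts ts' Hs IH r r' hw => [|t ts IHts] [|t' ts'] //=.
move=> [Hs] IH r r'; rewrite -!catA => /(IH t (mem_head _ _)) [-> hw].
have IH' : forall u, u \in ts -> forall (t' : tree) (r r' : seq nat),
     luk u ++ r = luk t' ++ r' -> u = t' /\ r = r'.
  by move=> u ut; apply: IH; rewrite inE ut orbT.
by case: (IHts ts' Hs IH' _ _ hw) => -> ->.
Qed.

Lemma luk_inj : injective luk.
Proof. by move=> t t' hw; case: (@luk_prefix t t' [::] [::]); rewrite ?hw. Qed.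

Lemma okw_decode s : forall w, okw w s -> exists f, size f = w /\ lukf f = s.
Proof.
elim: s => [|x s IH] w /=.
  by move/eqP->; exists [::].
case/andP => w0 /IH [f [Hf Hl]].
exists (Node (take x f) :: drop x f); split.
  rewrite /= size_drop Hf; lia.
rewrite lukf_cons lukE size_takel ?Hf ?leq_addl //=.
by rewrite /lukf -flatten_cat -map_cat cat_take_drop -/(lukf f) Hl.
Qed.

End Sec_T1.

Section Sec_T2.

Lemma size_luk t : size (luk t) = Defs.tsize t.
Proof.
elim/tree_ind2: t => ts IH /=; congr S; rewrite size_flatten /shape -map_comp.
by congr sumn; apply/eq_in_map => u /IH.
Qed.

Lemma size_lukf f : size (lukf f) = fsize f.
Proof. by rewrite /lukf size_flatten /shape -map_comp; congr sumn; apply: eq_map => u; rewrite /= size_luk. Qed.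

Lemma fsize_cons t f : fsize (t :: f) = Defs.tsize t + fsize f. Proof. by []. Qed.

Lemma forests_fuelS fuel m : forests_fuel fuel.+1 m.+1 =
    flatten [seq [seq Node f :: g | f <- forests_fuel fuel k,
                                    g <- forests_fuel fuel (m.+1 - k.+1)]
            | k <- iota 0 m.+1].
Proof. by []. Qed.

Lemma mem_forests fuel : forall m f, f \in forests_fuel fuel m -> fsize f = m.
Proof.
elim: fuel => [|fuel IH] m f //.
case: m => [|m]; first by rewrite inE => /eqP->.
rewrite forests_fuelS; case/flatten_mapP => k; rewrite mem_iota add0n => km.
case/allpairsP => [[g h] [/= /IH Hg /IH Hh ->]].
rewrite fsize_cons /= -/(fsize g) Hg Hh; lia.
Qed.

Lemma forests_complete fuel : forall f, fsize f < fuel -> f \in forests_fuel fuel (fsize f).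
Proof.
elim: fuel => [|fuel IH] f // Hf.
case: f Hf => [|[g] h] Hf; first by rewrite mem_head.
have E : fsize (Node g :: h) = (fsize g + fsize h).+1 by [].
rewrite E forests_fuelS.
apply/flatten_mapP; exists (fsize g); first by rewrite mem_iota; lia.
apply/allpairsP; exists (g, h); split => //=.
  apply: IH; move: Hf; rewrite fsize_cons /= -/(fsize g); lia.
have -> : (fsize g + fsize h).+1 - (fsize g).+1 = fsize h by lia.
apply: IH; move: Hf; rewrite fsize_cons /= -/(fsize g); lia.
Qed.

Lemma uniq_forests fuel : forall m, uniq (forests_fuel fuel m).
Proof.
elim: fuel => [|fuel IH] m //.
case: m => [|m] //; rewrite forests_fuelS.
have -> : forall (F : nat -> seq (seq tree)) s, flatten (map F s) = [seq x | k <- s, x <- F k].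
  by move=> F s; elim: s => //= k s ->; rewrite map_id.
apply: allpairs_uniq_dep; first exact: iota_uniq.
  move=> k _; apply: allpairs_uniq => //.
  by move=> [g h] [g' h'] _ _ /= [-> ->].
move=> [k x] [k' x'] /allpairsPdep [k1 [x1 [_ Hx1 [-> ->]]]] /allpairsPdep [k2 [x2 [_ Hx2 [-> ->]]]] /= E.
subst x2.
case/allpairsP: Hx1 => [[g h] [/= /mem_forests Hg _ E1]].
case/allpairsP: Hx2 => [[g' h'] [/= /mem_forests Hg' _ E2]].
by move: E1; rewrite E2 => -[Eg Eh]; subst.
Qed.

Lemma mem_plane_trees n t : (t \in plane_trees n) = (Defs.tsize t == n).
Proof.
case: n => [|n] /=; first by case: t.
apply/mapP/eqP => [[f /mem_forests Hf ->] /=|]; first by rewrite -/(fsize f) Hf.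
case: t => g /= [Hg]; exists g => //; rewrite -Hg; apply: forests_complete; rewrite /fsize; lia.
Qed.

Lemma uniq_plane_trees n : uniq (plane_trees n).
Proof.
case: n => [|n] //=; rewrite map_inj_uniq ?uniq_forests //.
by move=> f g [].
Qed.

End Sec_T2.

Section Sec_T3.

Lemma maxdeg_luk N t : (maxdeg t <= N) = all (fun x => x <= N) (luk t).
Proof.
elim/tree_ind2: t => ts IH /=; rewrite /lukf; move: (size ts) => a.
elim: ts IH => [|t ts IHts] IH /=; first by rewrite andbT.
rewrite geq_max all_cat IH ?mem_head //.
rewrite IHts; first by rewrite andbCA.
by move=> u ut; apply: IH; rewrite inE ut orbT.
Qed.

Local Open Scope ring_scope.

Lemma weight_luk (R : nzRingType) (mu : nat -> R) t :
  gw_weight mu t = \prod_(x <- luk t) mu x.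
Proof.
elim/tree_ind2: t => ts IH /=; rewrite big_cons; congr (_ * _).
elim: ts IH => [|t ts IHts] IH /=; first by rewrite big_nil.
rewrite big_cat IH ?mem_head //= IHts // => u ut; apply: IH.
by rewrite inE ut orbT.
Qed.

Lemma KT (R : nzRingType) (F : seq nat -> R) (Ls : seq (seq nat)) n :
  uniq Ls -> (forall s, (s \in Ls) = (size s == n) && (sumn s == n.-1)) ->
  \sum_(t <- plane_trees n) F (luk t) = \sum_(s <- Ls | okw 1 s) F s.
Proof.
move=> uL memL; rewrite -(big_map luk xpredT) -[RHS]big_filter; apply: perm_big.
apply: uniq_perm; first by rewrite map_inj_uniq ?uniq_plane_trees //; exact: luk_inj.
  exact: filter_uniq.
move=> s; rewrite mem_filter memL; apply/mapP/idP.
  move=> [t]; rewrite mem_plane_trees => /eqP Ht ->.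
  have ok : okw 1 (luk t) by rewrite -(cats0 (luk t)) okw_tree.
  have := okw_sum ok; rewrite size_luk Ht ok => hw; apply/andP; split => //.
  apply/andP; split => //; apply/eqP; lia.
case/andP => ok /andP[/eqP Hs _].
have [[|t [|u f]] [//= _ Hl]] := okw_decode ok.
exists t; last by rewrite -Hl /lukf /= cats0.
by rewrite mem_plane_trees -size_luk -Hs -Hl /lukf /= cats0.
Qed.

End Sec_T3.

Section Sec_T4.

Local Open Scope ring_scope.

Definition hw (s : seq nat) : int := (sumn s)%:Z - (size s)%:Z.

Lemma H_cat a b : hw (a ++ b) = hw a + hw b.
Proof. rewrite /hw sumn_cat size_cat !PoszD; lia. Qed.

Lemma H_cons x s : hw (x :: s) = x%:Z - 1 + hw s.
Proof. rewrite /hw /=; rewrite !PoszD; lia. Qed.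

Lemma okwP w s : okw w s =
  (w%:Z + hw s == 0) && all (fun k => 0 < w%:Z + hw (take k s)) (iota 0 (size s)).
Proof.
elim: s w => [|x s IH] w /=; first by rewrite /hw /= andbT; lia.
rewrite IH /=.
have -> : iota 1 (size s) = map (addn 1) (iota 0 (size s)) by rewrite -iotaDl.
have H0 : hw [::] = 0 by [].
rewrite all_map /= H0 addr0 ltz_nat.
case: w => [|w] /=; first by rewrite andbF.
rewrite H_cons; congr (_ && _).
  apply/eqP/eqP; rewrite PoszD; lia.
apply: eq_all => k /=; rewrite add0n H_cons.
suff -> : w.+1%:Z + (x%:Z - 1 + hw (take k s)) = (w + x)%N%:Z + hw (take k s) by [].
rewrite PoszD; lia.
Qed.

End Sec_T4.

Section Sec_T5.

Local Open Scope ring_scope.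

Lemma lt_helper (a b : int) : a < b -> 0 <= -1 - a + b. Proof. lia. Qed.

Lemma H_rot i s : hw (rot i s) = hw s.
Proof. by rewrite /hw size_rot (perm_sumn (permEl (perm_rot i s))). Qed.

Lemma H_take_rot s i k : (i <= size s)%N -> (k <= size s)%N ->
  hw (take k (rot i s)) = if (k < size s - i)%N then hw (take (i + k) s) - hw (take i s)
     else hw s - hw (take i s) + hw (take (k - (size s - i)) s).
Proof.
move=> ilt klt; rewrite /rot take_cat size_drop.
case: ifP => kl.
  by rewrite takeD H_cat; lia.
rewrite H_cat take_takel; last lia.
have : hw s = hw (take i s ++ drop i s) by rewrite cat_take_drop.
rewrite H_cat; lia.
Qed.

Lemma ok1_rot s i : (0 < size s)%N -> hw s = -1 ->
  okw 1 (rot i s) <-> (forall k, (k < size s)%N -> 0 <= hw (take k (rot i s))).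
Proof.
move=> s0 Hs; rewrite okwP H_rot Hs /= size_rot; split.
  move=> /allP Hall k kl; have := Hall k; rewrite mem_iota /= => /(_ kl); lia.
move=> Hk; apply/allP => k; rewrite mem_iota /= => /Hk; lia.
Qed.

Lemma argmin_ex (f : nat -> int) n : (0 < n)%N -> exists i, (i < n)%N /\ forall j, (j < n)%N -> f i <= f j.
Proof.
elim: n => [|n IH] // _; case: n IH => [|n] IH.
  by exists 0%N; split => // j; rewrite ltnS leqn0 => /eqP->.
have [i [ilt Hi]] := IH isT.
case: (lerP (f i) (f n.+1)) => Hin.
  exists i; split; first lia.
  by move=> j; rewrite ltnS leq_eqVlt => /orP[/eqP->|/Hi].
exists n.+1; split => // j; rewrite ltnS leq_eqVlt => /orP[/eqP->//|/Hi]; lia.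
Qed.

Lemma cyclic_unique s i j : (0 < size s)%N -> hw s = -1 -> (i < size s)%N -> (j < size s)%N ->
  okw 1 (rot i s) -> okw 1 (rot j s) -> i = j.
Proof.
move=> s0 Hs il jl /(ok1_rot i s0 Hs) Hi /(ok1_rot j s0 Hs) Hj.
wlog ij : i j il jl Hi Hj / (i < j)%N.
  move=> W; case: (ltngtP i j) => // ij; first exact: W.
  by apply/esym/W.
have := Hi (j - i)%N; rewrite H_take_rot; try lia.
have -> : (j - i < size s - i)%N by lia.
have -> : (i + (j - i))%N = j by lia.
move=> /(_ ltac:(lia)) A.
have := Hj (size s - j + i)%N; rewrite H_take_rot; try lia.
have -> : (size s - j + i < size s - j)%N = false by lia.
have -> : (size s - j + i - (size s - j))%N = i by lia.
move=> /(_ ltac:(lia)); rewrite Hs; lia.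
Qed.

Lemma cyclic_exists s : (0 < size s)%N -> hw s = -1 -> exists2 i, (i < size s)%N & okw 1 (rot i s).
Proof.
move=> s0 Hs; set n := size s; set h := fun k => hw (take k s).
pose P i := (i < n)%N && all (fun j => h i <= h j) (iota 0 n).
have exP : exists i, P i.
  have [i [il Hi]] := argmin_ex h s0; exists i; rewrite /P il /=.
  by apply/allP => j; rewrite mem_iota /= => /Hi.
case: (ex_minnP exP) => i /andP[il /allP Hi] Hmin.
have Hi' : forall j, (j < n)%N -> h i <= h j by move=> j jl; apply: Hi; rewrite mem_iota.
have Hlt : forall j, (j < i)%N -> h i < h j.
  move=> j ji; rewrite ltNge; apply/negP => hji.
  have : P j.
    rewrite /P (ltn_trans ji il) /=; apply/allP => k; rewrite mem_iota /= => kl.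
    exact: le_trans hji (Hi' k kl).
  by move/Hmin; lia.
exists i => //; apply/(ok1_rot i s0 Hs) => k kl.
rewrite H_take_rot; try lia.
case: ifP => kc.
  have := Hi' (i + k)%N ltac:(lia); rewrite /h; lia.
have := Hlt (k - (n - i))%N ltac:(lia); rewrite /h /n Hs.
move: (hw (take i s)) (hw (take (k - (size s - i)) s)) => a b ab.
exact: lt_helper.
Qed.

End Sec_T5.

Section Sec_T6.

Local Open Scope ring_scope.

Definition sqf n M (k : {ffun 'I_n -> 'I_M}) : seq nat := [seq (k i : nat) | i <- enum 'I_n].

Definition Lseq n m : seq (seq nat) :=
  [seq sqf k | k <- enum [pred k : {ffun 'I_n -> 'I_m.+1} | sumn (sqf k) == m]].

Lemma sumn_sq n M (k : {ffun 'I_n -> 'I_M}) : sumn (sqf k) = (\sum_(i < n) (k i : nat))%N.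
Proof. by rewrite sumnE big_map enumT. Qed.

Lemma prod_sq (R : nzRingType) (p : nat -> R) n M (k : {ffun 'I_n -> 'I_M}) :
  \prod_(x <- sqf k) p x = \prod_(i < n) p (k i).
Proof. by rewrite big_map enumT. Qed.

Lemma sum_massE (R : nzRingType) (p : nat -> R) n m :
  sum_mass p n m = \sum_(s <- Lseq n m) \prod_(x <- s) p x.
Proof.
rewrite /Lseq big_map big_enum_cond /sum_mass /=.
apply: eq_big => [k|k _]; first by rewrite andbT -sumn_sq inE; apply/idP/idP.
by rewrite prod_sq.
Qed.

Lemma nth_le_sumn s i : (nth 0 s i <= sumn s)%N.
Proof. elim: s i => [|x s IH] [|i] //=; [lia | have := IH i; lia]. Qed.

Lemma uniq_L n m : uniq (Lseq n m).
Proof.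
rewrite map_inj_uniq ?enum_uniq // => k k' /eq_in_map E.
apply/ffunP => i; apply/val_inj; exact: (E i (mem_enum _ _)).
Qed.

Lemma mem_L n m s : (s \in Lseq n m) = (size s == n) && (sumn s == m).
Proof.
apply/mapP/andP.
  move=> [k]; rewrite mem_enum inE => Hk ->; split => //.
  by rewrite size_map size_enum_ord.
move=> [/eqP Hs /eqP Hm].
pose k := [ffun i : 'I_n => inord (nth 0 s i) : 'I_m.+1].
have E : sqf k = s.
  rewrite /sqf -[RHS](mkseq_nth 0) Hs /mkseq -val_enum_ord -map_comp.
  apply: eq_map => i /=; rewrite ffunE inordK //; rewrite ltnS -Hm; exact: nth_le_sumn.
by exists k; rewrite // mem_enum inE E Hm.
Qed.

Lemma rot_reindex (R : nzRingType) (F : seq nat -> R) n m i :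
  \sum_(s <- Lseq n m) F (rot i s) = \sum_(s <- Lseq n m) F s.
Proof.
rewrite -(big_map (rot i) xpredT); apply: perm_big; apply: uniq_perm.
- by rewrite map_inj_uniq ?uniq_L //; exact: rot_inj.
- exact: uniq_L.
move=> s; apply/mapP/idP.
  by move=> [u]; rewrite !mem_L => Hu ->; rewrite size_rot (perm_sumn (permEl (perm_rot i u))).
move=> Hs; exists (rotr i s); last by rewrite rotrK.
by move: Hs; rewrite !mem_L size_rotr (perm_sumn (permEl (perm_rotr i s))).
Qed.

Lemma sum_ind_le1 (R : numDomainType) n (P : 'I_n -> bool) :
  (forall i j, P i -> P j -> i = j) -> \sum_(i < n) (P i)%:R <= 1 :> R.
Proof.
move=> U; case: (pickP P) => [i0 Pi0|none].
  rewrite (bigD1 i0) //= big1 ?Pi0 ?addr0 // => j nj.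
  by case Pj: (P j) => //; move: nj; rewrite (U _ _ Pi0 Pj) eqxx.
by rewrite big1 // => i _; rewrite none.
Qed.

Lemma sum_ind_eq1 (R : nzRingType) n (P : 'I_n -> bool) i0 :
  P i0 -> (forall i j, P i -> P j -> i = j) -> \sum_(i < n) (P i)%:R = 1 :> R.
Proof.
move=> Pi0 U.
rewrite (bigD1 i0) //= big1 ?Pi0 ?addr0 // => j nj.
by case Pj: (P j) => //; move: nj; rewrite (U _ _ Pi0 Pj) eqxx.
Qed.

Lemma count_okw (R : nzRingType) n s : (0 < n)%N -> s \in Lseq n n.-1 ->
  \sum_(i < n) (okw 1 (rot i s))%:R = 1 :> R.
Proof.
move=> n0; rewrite mem_L => /andP[/eqP Hs /eqP Hm].
have s0 : (0 < size s)%N by rewrite Hs.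
have HH : hw s = -1 by rewrite /hw Hm Hs; lia.
have [i il ok] := cyclic_exists s0 HH.
have iln : (i < n)%N by rewrite -Hs.
apply: (@sum_ind_eq1 _ _ (fun j : 'I_n => okw 1 (rot j s)) (Ordinal iln)) => // j k Hj Hk.
apply/val_inj => /=; apply: (cyclic_unique s0 HH) => //; rewrite Hs; exact: ltn_ord.
Qed.

Lemma cyclic_sum (R : nzRingType) (F : seq nat -> R) n :
  (0 < n)%N -> (forall i s, F (rot i s) = F s) ->
  \sum_(s <- Lseq n n.-1) F s = n%:R * \sum_(s <- Lseq n n.-1 | okw 1 s) F s.
Proof.
move=> n0 Finv.
transitivity (\sum_(s <- Lseq n n.-1) \sum_(i < n) (okw 1 (rot i s))%:R * F (rot i s)).
  rewrite big_seq [RHS]big_seq; apply: eq_bigr => s sL.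
  under eq_bigr do rewrite Finv.
  by rewrite -mulr_suml count_okw // mul1r.
rewrite exchange_big /=.
under eq_bigr do rewrite (rot_reindex (fun s => (okw 1 s)%:R * F s)).
rewrite sumr_const card_ord [RHS]mulr_natl big_mkcond /=; congr (_ *+ _).
rewrite [RHS]big_mkcond; apply: eq_bigr => s _; case: (okw 1 s); by rewrite ?mul1r ?mul0r.
Qed.

End Sec_T6.

Section Sec_T7.

Definition Qr (N : nat) (u : seq nat) : bool :=
  (head 0%N u == N.+1) && all (fun x => x <= N) (behead u).

Lemma Q_rot_find N s i : i < size s -> Qr N (rot i s) -> i = find (fun x => N < x) s.
Proof.
move=> il; rewrite /Qr /rot (drop_nth 0 il) /= => /andP[/eqP Hi].
rewrite all_cat => /andP[_ Ht].
rewrite -[in find _ s](cat_take_drop i s) find_cat (drop_nth 0 il) /= Hi ltnSn.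
have -> : has (fun x => N < x) (take i s) = false.
  by apply/negbTE/hasPn => x /(allP Ht); rewrite -leqNgt.
by rewrite size_takel ?addn0 // ltnW.
Qed.

Local Open Scope ring_scope.

Lemma count_Q_le1 (R : numDomainType) N n s : size s = n ->
  \sum_(i < n) (Qr N (rot i s))%:R <= 1 :> R.
Proof.
move=> Hs; apply: sum_ind_le1 => i j Hi Hj; apply/val_inj => /=.
have il : (i < size s)%N by rewrite Hs ltn_ord.
have jl : (j < size s)%N by rewrite Hs ltn_ord.
by rewrite (Q_rot_find il Hi) (Q_rot_find jl Hj).
Qed.

Lemma lower_sum (R : numDomainType) (F : seq nat -> R) n m N :
  (forall s, 0 <= F s) -> (forall i s, F (rot i s) = F s) ->
  n%:R * \sum_(s <- Lseq n m | Qr N s) F s <= \sum_(s <- Lseq n m) F s.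
Proof.
move=> F0 Finv.
have -> : n%:R * \sum_(s <- Lseq n m | Qr N s) F s =
   \sum_(i < n) \sum_(s <- Lseq n m) (Qr N (rot i s))%:R * F (rot i s).
  under [RHS]eq_bigr do rewrite (rot_reindex (fun s => (Qr N s)%:R * F s)).
  rewrite sumr_const card_ord [LHS]mulr_natl; congr (_ *+ _).
  rewrite big_mkcond; apply: eq_bigr => s _.
  by case: (Qr N s); rewrite ?mul1r ?mul0r.
rewrite exchange_big /= big_seq [X in _ <= X]big_seq; apply: ler_sum => s sL.
under eq_bigr do rewrite Finv.
rewrite -mulr_suml ler_piMl //; apply: count_Q_le1.
by move: sL; rewrite mem_L => /andP[/eqP].
Qed.

Lemma filterQ (R : nzRingType) (mu : nat -> R) n N : (N.+1 < n)%N ->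
  \sum_(s <- Lseq n n.-1 | Qr N s) \prod_(x <- s) mu x =
  mu N.+1 * \sum_(s <- Lseq n.-1 (n.-1 - N.+1) | all (fun x => x <= N)%N s) \prod_(x <- s) mu x.
Proof.
move=> Nn.
rewrite big_distrr /= -big_filter -[in RHS]big_filter.
have E : forall s, mu N.+1 * \prod_(x <- s) mu x = \prod_(x <- N.+1 :: s) mu x.
  by move=> s; rewrite big_cons.
under [RHS]eq_bigr do rewrite E.
rewrite -(big_map (cons N.+1) xpredT (fun u => \prod_(x <- u) mu x)); apply: perm_big; apply: uniq_perm.
- exact/filter_uniq/uniq_L.
- by rewrite map_inj_uniq ?filter_uniq ?uniq_L // => u v [].
case=> [|x s]; rewrite mem_filter mem_L.
  by rewrite /Qr /=; symmetry; apply/mapP => -[].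
case: (eqVneq x N.+1) => [->|xN].
  rewrite mem_map; last by move=> u v [].
  rewrite mem_filter mem_L /Qr /= eqxx /=.
  case: (all _ s) => //=; apply/andP/andP => -[/eqP A /eqP B]; split; apply/eqP; lia.
rewrite /Qr /= (negbTE xN) /=; symmetry; apply/mapP => -[u _ [Ex _]].
by rewrite Ex eqxx in xN.
Qed.

End Sec_T7.



Section Final.
Local Open Scope ring_scope.

Definition Pi {R : nzRingType} (mu : nat -> R) (s : seq nat) : R := \prod_(x <- s) mu x.
Definition G {R : nzRingType} (mu : nat -> R) N (s : seq nat) : R :=
  if all (fun x => x <= N)%N s then Pi mu s else 0.

Lemma Pi_rot (R : comNzRingType) (mu : nat -> R) i s : Pi mu (rot i s) = Pi mu s.
Proof. by rewrite /Pi (perm_big _ (permEl (perm_rot i s))). Qed.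

Lemma G_rot (R : comNzRingType) (mu : nat -> R) N i s : G mu N (rot i s) = G mu N s.
Proof. by rewrite /G Pi_rot (perm_all _ (permEl (perm_rot i s))). Qed.

Lemma prod_trunc (R : realType) (mu : nat -> R) N s :
  \prod_(x <- s) trunc_law mu N x = G mu N s * (\sum_(j < N.+1) mu j)^-1 ^+ size s.
Proof.
rewrite /G /Pi; elim: s => [|x s IH]; first by rewrite !big_nil expr0 mulr1.
rewrite !big_cons IH /trunc_law /=; case: (x <= N)%N => /=; last by rewrite !mul0r.
case: (all _ s); last by rewrite ?mul0r ?mulr0.
rewrite exprS; ring.
Qed.

Lemma walk_sum (R : realType) (mu : nat -> R) N n m :
  sum_mass (trunc_law mu N) n m =
  (\sum_(s <- Lseq n m) G mu N s) * (\sum_(j < N.+1) mu j)^-1 ^+ n.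
Proof.
rewrite sum_massE big_distrl /= big_seq [RHS]big_seq; apply: eq_bigr => s.
rewrite mem_L => /andP[/eqP Hs _]; by rewrite prod_trunc Hs.
Qed.

Lemma q_le1 (R : realType) (mu : nat -> R) N : offspring_distribution mu ->
  \sum_(j < N.+1) mu j <= 1.
Proof.
move=> [mu0 Hc].
set u := (fun n => \sum_(k < n) mu k) : nat -> R.
have nd : nondecreasing_seq u.
  apply/nondecreasing_seqP => n; rewrite /u big_ord_recr /= lerDl; exact: mu0.
have cu : cvgn u by apply: cvgP Hc.
have := nondecreasing_cvgn_le nd cu N.+1.
by rewrite (cvg_lim _ Hc).
Qed.

End Final.

Unset Implicit Arguments.
Local Open Scope ring_scope.

Theorem mainTheorem16 (R : realType) (mu : nat -> R) (N n : nat) :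
  offspring_distribution mu ->
  0 < \sum_(j < N.+1) mu j ->
  (N.+1 < n)%N ->
  0 < gw_size_mass mu n ->
  0 < n%:R * mu N.+1 * walk_prob (trunc_law mu N) n.-1 (- (N.+1)%:Z) ->
  prob_maxdeg_le mu n N <=
    walk_prob (trunc_law mu N) n (-1)
    / (n%:R * mu N.+1 * walk_prob (trunc_law mu N) n.-1 (- (N.+1)%:Z)).
Proof.
move=> od q0 Nn T0 D0.
have q1 : \sum_(j < N.+1) mu j <= 1 := q_le1 N od.
set q := \sum_(j < N.+1) mu j in q0 q1 D0 *.
have n0 : (0 < n)%N by lia.
have mu0 := od.1.
have Pi0 : forall s, 0 <= Pi mu s by move=> s; apply: prodr_ge0 => x _.
have G0 : forall s, 0 <= G mu N s by move=> s; rewrite /G; case: ifP.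
have ET : gw_size_mass mu n = \sum_(s <- Lseq n n.-1 | okw 1 s) Pi mu s.
  rewrite /gw_size_mass -(KT (Pi mu) (uniq_L n n.-1) (@mem_L n n.-1)).
  by apply: eq_bigr => t _; rewrite weight_luk.
have EN : \sum_(t <- plane_trees n | (maxdeg t <= N)%N) gw_weight mu t =
          \sum_(s <- Lseq n n.-1 | okw 1 s) G mu N s.
  rewrite big_mkcond /= -(KT (G mu N) (uniq_L n n.-1) (@mem_L n n.-1)).
  by apply: eq_bigr => t _; rewrite /G maxdeg_luk weight_luk.
have EW1 : walk_prob (trunc_law mu N) n (-1) =
           n%:R * (\sum_(s <- Lseq n n.-1 | okw 1 s) G mu N s) * q^-1 ^+ n.
  rewrite /walk_prob.
  have -> : n%:Z + -1 = (n.-1)%:Z by lia.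
  by rewrite le0z_nat /= walk_sum (cyclic_sum n0 (G_rot mu N)).
have EW2 : walk_prob (trunc_law mu N) n.-1 (- (N.+1)%:Z) =
   (\sum_(s <- Lseq n.-1 (n.-1 - N.+1) | all (fun x => x <= N)%N s) Pi mu s) * q^-1 ^+ n.-1.
  rewrite /walk_prob.
  have -> : (n.-1)%:Z + - (N.+1)%:Z = (n.-1 - N.+1)%N%:Z by lia.
  rewrite le0z_nat /= walk_sum [in RHS]big_mkcond.
  by congr (_ * _); apply: eq_bigr => s _; rewrite /G.
set B := \sum_(s <- _ | _) Pi mu s in EW2.
set S := \sum_(s <- _ | okw 1 s) Pi mu s in ET.
set SN := \sum_(s <- _ | okw 1 s) G mu N s in EN EW1.
have SB : mu N.+1 * B <= S.
  have := @lower_sum _ (Pi mu) n n.-1 N Pi0 (Pi_rot mu).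
  rewrite (filterQ mu Nn) (cyclic_sum n0 (Pi_rot mu)) -/B -/S.
  by rewrite ler_pM2l // ltr0n.
have SN0 : 0 <= SN by apply: sumr_ge0 => s _.
rewrite EW2 in D0.
have muB0 : 0 < mu N.+1 * B.
  move: D0; rewrite mulrA pmulr_lgt0 ?exprn_gt0 ?invr_gt0 //.
  by rewrite -mulrA pmulr_rgt0 // ltr0n.
rewrite /prob_maxdeg_le EN ET EW1 EW2.
have -> : n%:R * SN * q^-1 ^+ n / (n%:R * mu N.+1 * (B * q^-1 ^+ n.-1)) =
          SN / (q * (mu N.+1 * B)).
  have Eq : q^-1 ^+ n = q^-1 * q^-1 ^+ n.-1 by rewrite -exprS prednK.
  rewrite Eq; field.
  have := lt0r_neq0 muB0; rewrite mulf_eq0 negb_or => /andP[-> ->].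
  by rewrite lt0r_neq0 //= expf_neq0 ?invr_eq0 ?lt0r_neq0 //= ltr0n.
apply: (@le_trans _ _ (SN / (mu N.+1 * B))).
  rewrite ler_wpM2l // lef_pV2 // ?posrE //; exact: lt_le_trans muB0 SB.
rewrite ler_wpM2l // lef_pV2 ?posrE ?(mulr_gt0 q0 muB0) //.
by rewrite ger_pMl.
Qed.
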